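(* If $(B,\beta_1,\ldots,\beta_B)$ is a feasible solution of problem (RO-$\Sigma$), then for all contests $c<c'$ with $c\equiv c'$, either $c\prec_{\beta_1\cdots\beta_B}c'$ or $c'\prec_{\beta_1\cdots\beta_B}c$.
   Context: A ballot style consists of contests $\mathcal{C}=\{1,\ldots,C\}$, candidates $\mathcal{N}=\{1,\ldots,N\}$ partitioned into nonempty sets $\mathcal{N}_c$ ($c\in\mathcal{C}$), and positive integers $v_c$. A filled-out ballot is a subset $\beta\subseteq\mathcal{N}$; $\mathscr{B}=\{\beta\subseteq\mathcal{N}: |\mathcal{N}_c\cap\beta|\le v_c\ \forall c\}$. For $i\in\mathcal{N}_c$: $T^*_i(\beta_1,\ldots,\beta_B)=\sum_{b=1}^B\mathbb{I}\{i\in\beta_b\text{ and }|\mathcal{N}_c\cap\beta_b|\le v_c\}$, and for a bijection $\sigma$ of $\mathcal{N}$, $T^\sigma_i(\beta_1,\ldots,\beta_B)=\sum_{b=1}^B\mathbb{I}\{\sigma(i)\in\beta_b\text{ and }|\{\sigma(j)\in\beta_b: j\in\mathcal{N}_c\}|\le v_c\}$. $\Sigma$ is the set of non-identity bijections $\mathcal{N}\to\mathcal{N}$. Problem (RO-$\Sigma$): minimize $B$ over $B\in\mathbb{N}$ and $\beta_1,\ldots,\beta_B\in\mathscr{B}$ subject to $T^\sigma(\beta_1,\ldots,\beta_B)\neq T^*(\beta_1,\ldots,\beta_B)$ for all $\sigma\in\Sigma$. Two contests $c,c'$ are equivalent, $c\equiv c'$, iff $|\mathcal{N}_c|=|\mathcal{N}_{c'}|$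 and $v_c=v_{c'}$. $\mathcal{N}_c^k$ denotes the candidate with the $k$-th smallest index in $\mathcal{N}_c$ ($k=1,\ldots,|\mathcal{N}_c|$). Write $n_b(i)=|\{b\in\{1,\ldots,B\}: i\in\beta_b\}|$. We write $c\prec_{\beta_1\cdots\beta_B}c'$ iff $c\equiv c'$ and there exists $k\in\{1,\ldots,|\mathcal{N}_c|\}$ with $n(\mathcal{N}_c^{m})=n(\mathcal{N}_{c'}^{m})$ for all $m\in\{k+1,\ldots,|\mathcal{N}_c|\}$ and $n(\mathcal{N}_c^{k})<n(\mathcal{N}_{c'}^{k})$, where $n(i)=|\{b\in\{1,\ldots,B\}: i\in\beta_b\}|$. *)

(* Defs.v *)
From mathcomp Require Import all_boot all_fingroup.
Set Implicit Arguments. Unset Strict Implicit. Unset Printing Implicit Defensive.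

(* Ballot style: candidates 'I_N, contests 'I_C, [con i] = the contest of
   candidate i (so N_c = [set i | con i == c]), [v c] = votes allowed in c. *)
Section Ballots.
Variables (N C : nat) (con : 'I_N -> 'I_C) (v : 'I_C -> nat).

Definition Ncand (c : 'I_C) : {set 'I_N} := [set i | con i == c].

Definition valid_ballot (beta : {set 'I_N}) : Prop :=
  forall c : 'I_C, #|Ncand c :&: beta| <= v c.

Variable B : nat.
Variable beta : 'I_B -> {set 'I_N}.

Definition Tstar : {ffun 'I_N -> nat} :=
  [ffun i => \sum_(b < B)
     ((i \in beta b) && (#|Ncand (con i) :&: beta b| <= v (con i)) : nat)].

Definition Tsig (s : {perm 'I_N}) : {ffun 'I_N -> nat} :=
  [ffun i => \sum_(b < B)
     ((s i \in beta b) &&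
      (#|[set s j | j in Ncand (con i) & s j \in beta b]| <= v (con i)) : nat)].

Definition feasible : Prop :=
  (forall b, valid_ballot (beta b)) /\
  (forall s : {perm 'I_N}, s != 1%g -> Tsig s != Tstar).

Definition nb (i : 'I_N) : nat := #|[set b : 'I_B | i \in beta b]|.

(* candidates of contest c in increasing index order; N_c^k is the (k-1)-th
   entry (0-based) of this list, for 1 <= k <= |N_c| *)
Definition cand_list (c : 'I_C) : seq 'I_N := [seq i <- enum 'I_N | con i == c].

Definition nk (c : 'I_C) (k : nat) : nat := nth 0 (map nb (cand_list c)) k.-1.

Definition equiv_contest (c c' : 'I_C) : Prop :=
  #|Ncand c| = #|Ncand c'| /\ v c = v c'.

Definition prec (c c' : 'I_C) : Prop :=
  equiv_contest c c' /\
  exists k, [/\ 1 <= k <= #|Ncand c|,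
    (forall m, k < m <= #|Ncand c| -> nk c m = nk c' m) &
    nk c k < nk c' k].

End Ballots.

(* Main.v *)
Require Import Defs.
From mathcomp Require Import all_boot all_fingroup.
From mathcomp Require Import zify.
From Stdlib Require Import Classical.

Lemma size_cl N C (con : 'I_N -> 'I_C) c : size (cand_list con c) = #|Ncand con c|.
Proof. rewrite cardE; apply/perm_size/uniq_perm.
- exact/filter_uniq/enum_uniq.
- exact: enum_uniq.
- by move=> i; rewrite mem_filter !mem_enum /Ncand !inE andbT.
Qed.

Lemma mem_cl N C (con : 'I_N -> 'I_C) c i : (i \in cand_list con c) = (con i == c).
Proof. by rewrite mem_filter mem_enum andbT. Qed.

Lemma uniq_cl N C (con : 'I_N -> 'I_C) c : uniq (cand_list con c).
Proof. exact/filter_uniq/enum_uniq. Qed.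

Lemma sum_card B (P : pred 'I_B) : \sum_(b < B) (P b : nat) = #|[set b | P b]|.
Proof. rewrite cardsE -sum1_card [RHS]big_mkcond /=; apply: eq_bigr => b _; rewrite unfold_in; by case: (P b). Qed.

Lemma Tstar_nb N C (con : 'I_N -> 'I_C) v B (beta : 'I_B -> {set 'I_N}) i :
  (forall b, valid_ballot con v (beta b)) -> Tstar con v beta i = nb beta i.
Proof.
move=> H; rewrite ffunE /nb -(@sum_card _ (fun b => i \in beta b)).
by apply: eq_bigr => b _; rewrite H andbT.
Qed.

Lemma Tsig_nb N C (con : 'I_N -> 'I_C) v B (beta : 'I_B -> {set 'I_N}) (s : {perm 'I_N}) i :
  (forall b, valid_ballot con v (beta b)) ->
  (forall j, con j = con i -> con (s j) = con (s i)) ->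
  v (con (s i)) = v (con i) ->
  Tsig con v beta s i = nb beta (s i).
Proof.
move=> H Hs Hv; rewrite ffunE /nb -(@sum_card _ (fun b => s i \in beta b)).
apply: eq_bigr => b _; case: (s i \in beta b) => //=.
suff -> : #|[set s j | j in Ncand con (con i) & s j \in beta b]| <= v (con i) by [].
rewrite -Hv; apply: leq_trans (H b (con (s i))).
apply: subset_leq_card; apply/subsetP => x /imsetP [j Hj ->].
move: Hj; rewrite !inE => /andP [Hj Hb]; rewrite Hb andbT.
by rewrite (Hs j (eqP Hj)).
Qed.

Section Main.
Variables (N C : nat) (con : 'I_N -> 'I_C) (c c' : 'I_C).
Hypothesis Hcc : c != c'.
Hypothesis Hsz : size (cand_list con c) = size (cand_list con c').
Let L := cand_list con c.
Let L' := cand_list con c'.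

Definition fsw (i : 'I_N) : 'I_N :=
  if con i == c then nth i L' (index i L)
  else if con i == c' then nth i L (index i L') else i.

Lemma con_fsw i : con (fsw i) =
  if con i == c then c' else if con i == c' then c else con i.
Proof.
rewrite /fsw; case: eqP => Hi.
  apply/eqP; rewrite -mem_cl; apply: mem_nth; rewrite -Hsz index_mem mem_cl Hi //.
case: eqP => Hi' //.
apply/eqP; rewrite -mem_cl; apply: mem_nth; rewrite Hsz index_mem mem_cl Hi' //.
Qed.

Lemma fswK : involutive fsw.
Proof.
move=> i; have := con_fsw i.
case: (eqVneq (con i) c) => Hi.
  move=> Hf; rewrite {1}/fsw Hf eq_sym (negbTE Hcc) eqxx.
  rewrite /fsw Hi eqxx.
  rewrite index_uniq ?uniq_cl ?nth_index // ?mem_cl ?Hi // -Hsz index_mem mem_cl Hi //.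
case: (eqVneq (con i) c') => Hi'.
  move=> Hf; rewrite {1}/fsw Hf eqxx.
  rewrite /fsw (negbTE Hi) Hi' eqxx.
  rewrite index_uniq ?uniq_cl ?nth_index // ?mem_cl ?Hi' // Hsz index_mem mem_cl Hi' //.
move=> _; rewrite /fsw (negbTE Hi) (negbTE Hi') (negbTE Hi) (negbTE Hi') //.
Qed.

Lemma nb_fsw B (beta : 'I_B -> {set 'I_N}) :
  map (nb beta) L = map (nb beta) L' -> forall i, nb beta (fsw i) = nb beta i.
Proof.
move=> E i; rewrite /fsw.
case: eqP => Hi.
  have Hk : index i L < size L' by rewrite -Hsz index_mem mem_cl Hi.
  rewrite -(nth_map i 0) // -E (nth_map i 0) ?Hsz // nth_index // mem_cl Hi //.
case: eqP => Hi' //.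
have Hk : index i L' < size L by rewrite Hsz index_mem mem_cl Hi'.
rewrite -(nth_map i 0) // E (nth_map i 0) ?Hsz -?Hsz // nth_index // mem_cl Hi' //.
Qed.

End Main.

Theorem lemma3 (N C : nat) (con : 'I_N -> 'I_C) (v : 'I_C -> nat)
  (Hnonempty : forall c : 'I_C, exists i : 'I_N, con i = c)
  (Hv : forall c : 'I_C, 0 < v c)
  (B : nat) (beta : 'I_B -> {set 'I_N}) :
  feasible con v beta ->
  forall c c' : 'I_C, (c < c')%N -> equiv_contest con v c c' ->
    prec con v beta c c' \/ prec con v beta c' c.
Proof.
move=> [Hval Hfeas] c c' Hlt [Hcard Hvv].
have Hcc : c != c' by rewrite neq_ltn Hlt.
have Hsz : size (cand_list con c) = size (cand_list con c') by rewrite !size_cl.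
set n := #|Ncand con c|.
case: (classic (prec con v beta c c' \/ prec con v beta c' c)) => // Hn.
exfalso.
have Hall : forall j m, n - j < m <= n -> nk con beta c m = nk con beta c' m.
  elim=> [|j IH] m Hm; first by lia.
  case: (ltnP (n - j) m) => Hm2; first by apply: IH; lia.
  case: (ltngtP (nk con beta c m) (nk con beta c' m)) => // Hc.
  - exfalso; apply: Hn; left; split => //; exists m; split => //; first by lia.
    by move=> m' Hm'; apply: IH; lia.
  - exfalso; apply: Hn; right; split => //; exists m; split => //; first by rewrite -Hcard; lia.
    by move=> m' Hm'; symmetry; apply: IH; rewrite -Hcard in Hm'; lia.
have E : map (nb beta) (cand_list con c) = map (nb beta) (cand_list con c').
  apply: (eq_from_nth (x0 := 0)); first by rewrite !size_map.
  move=> k; rewrite size_map size_cl => Hk.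
  by have := Hall n k.+1; rewrite /nk /=; apply; lia.
have inj : injective (@fsw _ _ con c c') by apply: can_inj (@fswK _ _ con c c' Hcc Hsz).
pose s := perm inj.
have [i0 Hi0] := Hnonempty c.
have Hs1 : s != 1%g.
  apply/eqP => E1; have := congr1 (fun p : {perm 'I_N} => con (p i0)) E1.
  rewrite /= perm1 permE (@con_fsw _ _ con c c' Hsz) Hi0 eqxx => /eqP; by rewrite eq_sym (negbTE Hcc).
apply: (negP (Hfeas s Hs1)); apply/eqP/ffunP => i.
rewrite Tstar_nb // Tsig_nb //.
- by rewrite permE (@nb_fsw _ _ con c c' Hsz _ beta E).
- move=> j Hj; rewrite !permE !(@con_fsw _ _ con c c' Hsz) Hj //.
- rewrite permE (@con_fsw _ _ con c c' Hsz); case: eqP => [->|]; first by rewrite Hvv.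
  by case: eqP => [->|].
Qed.
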